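(* Let $G$ and $N$ be finite groups of the same order, let $\mathfrak{f}:G\to\mathrm{Aut}(N)$ be a homomorphism and let $\mathfrak{g}:G\to N$ be a bijective map such that $\mathfrak{g}(\sigma\tau)=\mathfrak{g}(\sigma)\cdot\mathfrak{f}(\sigma)(\mathfrak{g}(\tau))$ for all $\sigma,\tau\in G$. Let $M$ be any characteristic subgroup of $N$, and let $\theta_M:\mathrm{Aut}(N)\to\mathrm{Aut}(N/M)$, $\theta_M(\varphi)(\eta M)=\varphi(\eta)M$, be the natural homomorphism. Define $H=\mathfrak{g}^{-1}(M)$. Then $H$ is a subgroup of $G$ and $\mathcal{E}'(H,M)$ is non-empty. Moreover, if $N/M$ is solvable and $\ker(\theta_M\circ\mathfrak{f})$ is insolvable, then $H$ is insolvable.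
   Context: For a finite group $M$, let $\mathrm{Perm}(M)$ be the group of all permutations of the set $M$. A subgroup $\mathcal{G}\le \mathrm{Perm}(M)$ is regular if the map $\mathcal{G}\to M$, $\sigma\mapsto\sigma(1_M)$, is bijective. Let $\rho:M\to\mathrm{Perm}(M)$, $\rho(\eta)(x)=x\eta^{-1}$. The holomorph of $M$ is $\mathrm{Hol}(M)=\rho(M)\rtimes\mathrm{Aut}(M)\le\mathrm{Perm}(M)$. For a group $H$ with $|H|=|M|$, $\mathcal{E}'(H,M)$ denotes the set of regular subgroups of $\mathrm{Hol}(M)$ isomorphic to $H$. *)

(* Defs.v *)
From mathcomp Require Import all_boot all_fingroup nilpotent.
Set Implicit Arguments. Unset Strict Implicit. Unset Printing Implicit Defensive.
Local Open Scope group_scope.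

(* The permutation group Perm(M) of the (underlying set of the) group M is
   {perm subg_of M}, where subg_of M is the finGroupType of elements of M. *)

Section Holomorph.
Variables (nT : finGroupType) (M : {group nT}).

Definition hol_rho (eta : subg_of M) : {perm subg_of M} :=
  perm (mulIg eta^-1).

Definition Hol : {set {perm subg_of M}} :=
  (hol_rho @: [set: subg_of M]) * Aut [set: subg_of M].

Definition regular (X : {set {perm subg_of M}}) : Prop :=
  {in X &, injective (fun s : {perm subg_of M} => s 1)} /\
  (fun s : {perm subg_of M} => s 1) @: X = [set: subg_of M].

Definition Eprime (hT : finGroupType) (H : {set hT})
    (X : {group {perm subg_of M}}) : Prop :=
  X \subset Hol /\ regular X /\ (X \isog H).
End Holomorph.

Arguments Eprime {nT} M {hT} H X.
Arguments regular {nT} M X.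

Definition theta (nT : finGroupType) (M : {set nT}) (phi : {perm nT})
    (C : coset_of M) : coset_of M := coset M (phi (repr C)).

Arguments theta {nT} M phi C.

Definition ker_theta_f (gT nT : finGroupType) (G : {set gT}) (N M : {set nT})
    (f : gT -> {perm nT}) : {set gT} :=
  [set s in G | [forall C in N / M, theta M (f s) C == C]].

(* Main.v *)
Require Import Defs.
From mathcomp Require Import all_boot all_fingroup nilpotent.
Local Open Scope group_scope.

Definition mkperm (T : finType) (F : T -> T) : {perm T} :=
  match injectiveP F with ReflectT Finj => perm Finj | ReflectF _ => 1 end.
Arguments mkperm {T} F.

Lemma mkpermE {T : finType} (F : T -> T) : injective F -> mkperm F =1 F.
Proof.
rewrite /mkperm; case: injectiveP => [Finj|nFinj] Fi x; first by rewrite permE.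
by case: nFinj.
Qed.

Lemma Aut_morphV {nT : finGroupType} {N : {group nT}} {a : {perm nT}} {x} :
  a \in Aut N -> x \in N -> a x^-1 = (a x)^-1.
Proof.
move=> Aa Nx; have := morphV (autm Aa) Nx; by rewrite !autmE.
Qed.

Lemma solvableS_set {gT : finGroupType} {A B : {set gT}} :
  A \subset B -> solvable B -> solvable A.
Proof.
move=> sHG solG; apply/forall_inP=> K /subsetIP[sKH sKK'].
by rewrite (forall_inP solG) // subsetI (subset_trans sKH).
Qed.

Theorem proposition3p3 (gT nT : finGroupType) (G : {group gT}) (N M : {group nT})
    (f : {morphism G >-> {perm nT}}) (g : gT -> nT) :
  #|G| = #|N| ->
  f @* G \subset Aut N ->
  {in G &, injective g} -> g @: G = N ->
  {in G &, forall s t, g (s * t) = g s * f s (g t)} ->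
  M \char N ->
  let H := G :&: g @^-1: M in
  [/\ group_set H,
      exists X : {group {perm subg_of M}}, Eprime M H X
    & solvable (N / M) -> ~~ solvable (ker_theta_f G N M f) -> ~~ solvable H].
Proof.
move=> oGN fAut ginj gim gcoc charMN H.
have fA s : s \in G -> f s \in Aut N.
  by move=> Gs; apply: (subsetP fAut); apply: mem_morphim.
have fVA s : s \in G -> (f s)^-1 \in Aut N.
  by move=> Gs; rewrite (@groupV _ [Aut N]) fA.
have sMN : M \subset N := char_sub charMN.
have chM : forall a, a \in Aut N -> forall x, x \in M -> a x \in M.
  move: charMN => /andP[_ /forall_inP chM] a Aa x Mx.
  by apply: (subsetP (chM a Aa)); apply: imset_f.
have fN s x : s \in G -> x \in N -> f s x \in N.
  by move=> Gs Nx; exact: (Aut_closed (fA s Gs) Nx).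
have fVN s x : s \in G -> x \in N -> (f s)^-1 x \in N.
  by move=> Gs Nx; exact: (Aut_closed (fVA s Gs) Nx).
have fmorph s : s \in G -> {in N &, {morph f s : x y / x * y}}.
  by move=> Gs; apply/morphicP; apply: Aut_morphic (fA s Gs).
have fVmorph s : s \in G -> {in N &, {morph (f s)^-1 : x y / x * y}}.
  by move=> Gs; apply/morphicP; apply: Aut_morphic (fVA s Gs).
have gN s : s \in G -> g s \in N.
  by move=> Gs; rewrite -gim; apply: imset_f.
have g1 : g 1 = 1.
  have := gcoc 1 1 (group1 _) (group1 _); rewrite mulg1 morph1 perm1.
  by move/(congr1 (mulg (g 1)^-1)); rewrite mulKg mulVg.
have fcomm s t x : s \in G -> t \in G -> x \in N -> f (s * t) x = f s (f t x).
  move=> Gs Gt; rewrite -gim => /imsetP[r Gr ->].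
  have e1 := gcoc (s * t) r (groupM Gs Gt) Gr.
  have e2 := gcoc s (t * r) Gs (groupM Gt Gr).
  have Ngr := gN r Gr; have Nft := fN t _ Gt Ngr.
  rewrite mulgA e1 gcoc // gcoc // fmorph ?gN // -!mulgA in e2.
  by move: e2 => /mulgI /mulgI.
have gV s : s \in G -> g s^-1 = ((f s)^-1 (g s))^-1.
  move=> Gs; have := gcoc s s^-1 Gs (groupVr Gs).
  rewrite mulgV g1 => /(congr1 (mulg (g s)^-1)); rewrite mulKg mulg1 => e.
  rewrite -(Aut_morphV (fVA s Gs) (gN s Gs)) e permK //.
have Hgs : group_set H.
  apply/group_setP; split; first by rewrite !inE group1 g1 group1.
  move=> s t; rewrite !inE => /andP[Gs Ms] /andP[Gt Mt].
  by rewrite groupM // gcoc // groupM // chM ?fA.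
split => //.
pose HG := Group Hgs.
have HP s : s \in HG -> s \in G /\ g s \in M by rewrite !inE => /andP[].
have valM (u : subg_of M) : val u \in M by apply: subgP.
have valN (u : subg_of M) : val u \in N by apply: (subsetP sMN).
pose psi s := mkperm (fun u : subg_of M => subg M ((f s)^-1 (val u))).
have psiE s u : s \in G -> val (psi s u) = (f s)^-1 (val u).
  move=> Gs; rewrite /psi mkpermE ?subgK ?chM ?fVA //.
  move=> u1 u2 /(congr1 val); rewrite !subgK ?chM ?fVA // => /perm_inj; apply: val_inj.
pose Phi s := hol_rho (subg M (g s)^-1) * psi s.
have PhiE s u : s \in HG -> val (Phi s u) = (f s)^-1 (val u * g s).
  case/HP => Gs Ms; rewrite /Phi permM psiE //.
  have -> : hol_rho (subg M (g s)^-1) u = u * (subg M (g s)^-1)^-1.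
    by rewrite /hol_rho permE.
  by have := @subgK _ _ _ (groupVr Ms) => /= ->; rewrite invgK.
have Phi1 s : s \in HG -> val (Phi s 1) = (g s^-1)^-1.
  move=> Hs; have [Gs _] := HP s Hs.
  by rewrite PhiE //= mul1g gV // invgK.
have key s t : s \in HG -> t \in HG -> Phi s 1 = Phi t 1 -> s = t.
  move=> Hs Ht /(congr1 val); rewrite !Phi1 // => /invg_inj.
  have [Gs _] := HP s Hs; have [Gt _] := HP t Ht.
  by move/ginj => e; apply: invg_inj; apply: e; rewrite groupV.
have PhiM : {in HG &, {morph Phi : x y / x * y}}.
  move=> s t Hs Ht; have [Gs Ms] := HP s Hs; have [Gt Mt] := HP t Ht.
  apply/permP => u; apply: val_inj; rewrite permM !PhiE ?groupM //.
  have Nst : (f s)^-1 (val u * g s) \in N by rewrite fVN ?groupM ?gN.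
  apply: (@perm_inj _ (f (s * t))); rewrite permKV fcomm ?groupM ?fVN ?gN //.
  rewrite permKV fmorph ?gN // permKV gcoc // mulgA //.
  by rewrite groupM ?gN.
pose PhiG := Morphism PhiM.
exists (PhiG @* HG)%G; split; last split.
- apply/subsetP => p /morphimP[s _ Hs ->] /=.
  have [Gs _] := HP s Hs.
  rewrite /Hol; apply: mem_mulg; first by apply: imset_f; rewrite inE.
  rewrite inE; apply/andP; split.
    by apply/subsetP => x _; rewrite inE.
  apply/morphicP => u v _ _; apply: val_inj.
  change (val (psi s u * psi s v)) with (val (psi s u) * val (psi s v)).
  rewrite !psiE //; change (val (u * v)) with (val u * val v).
  by rewrite fVmorph.
- split.
    move=> p q /morphimP[s _ Hs ->] /morphimP[t _ Ht ->] /= e.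
    by rewrite (key s t Hs Ht e).
  apply/setP => u; rewrite in_setT; apply/imsetP.
  have : (val u)^-1 \in N by rewrite groupV valN.
  rewrite -gim => /imsetP[r Gr er].
  have Hr : r \in HG by rewrite !inE Gr -er groupV valM.
  exists (Phi r^-1); first by apply: mem_morphim; rewrite groupV.
  apply: val_inj; rewrite Phi1 ?groupV // invgK -er invgK //.
- have injPhi : 'injm PhiG.
    apply/injmP => s t Hs Ht /= e; apply: key => //; by rewrite e.
  exact: (isog_symr (sub_isog (subxx HG) injPhi)).
move=> solNM; apply: contra => solH.
have nMN : N \subset 'N(M) := char_norm charMN.
have nMx x : x \in N -> x \in 'N(M) by move=> Nx; apply: (subsetP nMN).
pose K2 := [set s in G | [forall x in N, coset M (f s x) == coset M x]].
have K2P s : s \in K2 -> s \in G /\ forall x, x \in N -> coset M (f s x) = coset M x.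
  by rewrite inE => /andP[Gs /forall_inP K]; split=> // x Nx; apply/eqP; apply: K.
have K2gs : group_set K2.
  apply/group_setP; split.
    rewrite inE group1; apply/forall_inP => x _; by rewrite morph1 perm1.
  move=> s t /K2P[Gs Ks] /K2P[Gt Kt]; rewrite inE groupM //.
  by apply/forall_inP => x Nx; rewrite fcomm // Ks ?fN // Kt.
pose K2G := Group K2gs.
have sub1 : ker_theta_f G N M f \subset K2G.
  apply/subsetP => s; rewrite inE => /andP[Gs /forall_inP K].
  rewrite inE Gs; apply/forall_inP => x Nx.
  have Cq : coset M x \in N / M by apply: mem_quotient.
  have := K _ Cq; rewrite /theta => /eqP e.
  have : repr (coset M x) \in M :* x.
    by rewrite -val_coset ?nMx // mem_repr_coset.
  case/rcosetP => m Mm ere.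
  have Nm : m \in N by apply: (subsetP sMN).
  by rewrite -e ere fmorph // coset_kerl // chM ?fA.
apply: (solvableS_set sub1).
have kmorph : {in K2G &, {morph (fun s => coset M (g s)) : x y / x * y}}.
  move=> s t /K2P[Gs Ks] /K2P[Gt Kt] /=.
  by rewrite gcoc // morphM ?nMx ?fN ?gN //= Ks ?gN.
pose kap := Morphism kmorph.
rewrite (series_sol (ker_normal kap)); apply/andP; split.
  apply: solvableS_set solH; apply/subsetP => s Ks.
  have K2s := dom_ker Ks.
  have [Gs _] := K2P s K2s.
  have := mker Ks => /= e.
  by rewrite inE Gs inE; apply: coset_idr; rewrite ?nMx ?gN.
rewrite (isog_sol (first_isog kap)); apply: solvableS_set solNM.
apply/subsetP => y /morphimP[s _ Ks ->] /=.
have [Gs _] := K2P s Ks.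
by apply: mem_quotient; apply: gN.
Qed.
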